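(* For $n\in\{0,1,2,\dots\}$ define \[ \omega_n=\begin{cases}\dfrac{2n+3}{n+1}\,\dfrac{\Gamma\left(\frac n2+1\right)}{\Gamma\left(\frac{n+1}{2}\right)}, & n\text{ odd},\\[3ex] (n+1)\dfrac{\Gamma\left(\frac{n+1}{2}\right)}{\Gamma\left(\frac n2+1\right)}, & n\text{ even}.\end{cases} \] Then the sequence $(\omega_n)_{n\ge0}$ is positive and strictly increasing, and the sequence $(\tau_n)_{n\ge0}$ given by $\tau_n=\omega_{n+1}-\omega_n$ is positive and non-increasing.
   Context: $\Gamma$ denotes the Gamma function. *)

(* Defs.v *)
From Stdlib Require Import Reals Lra Lia.
From Coquelicot Require Import Coquelicot.
Open Scope R_scope.

Definition Gamma (x : R) : R :=
  RInt_gen (fun t => Rpower t (x - 1) * exp (- t))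
           (at_right 0) (Rbar_locally p_infty).

Definition omega (n : nat) : R :=
  if Nat.odd n then
    (2 * INR n + 3) / (INR n + 1) * (Gamma (INR n / 2 + 1) / Gamma ((INR n + 1) / 2))
  else
    (INR n + 1) * (Gamma ((INR n + 1) / 2) / Gamma (INR n / 2 + 1)).

Definition tau (n : nat) : R := omega (S n) - omega n.

(* Main.v *)
Require Import Defs.
From Stdlib Require Import Reals Lra Lia Classical.
From Coquelicot Require Import Coquelicot.
Open Scope R_scope.

Lemma Rp_derive (y t : R) : 0 < t ->
  is_derive (fun u => Rpower u y) t (y * Rpower t (y - 1)).
Proof. intro Ht. apply is_derive_Reals. now apply derivable_pt_lim_power. Qed.

Lemma Rp_cont (y t : R) : 0 < t -> continuous (fun u => Rpower u y) t.
Proof. intro Ht. apply (@ex_derive_continuous R_AbsRing R_NormedModule). eexists. now apply Rp_derive. Qed.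

Lemma expm_derive (t : R) : is_derive (fun u => exp (- u)) t (- exp (- t)).
Proof. auto_derive; auto; ring. Qed.

Lemma expm_cont (t : R) : continuous (fun u => exp (- u)) t.
Proof. apply (@ex_derive_continuous R_AbsRing R_NormedModule). eexists. apply expm_derive. Qed.

Lemma prod_cont (y t : R) : 0 < t -> continuous (fun u => Rpower u y * exp (- u)) t.
Proof. intro Ht. apply (continuous_mult (fun u => Rpower u y) (fun u => exp (-u))).
  now apply Rp_cont. apply expm_cont. Qed.

Definition gfun (x t : R) := - (Rpower t x * exp (- t)).
Definition dfun (x t : R) := Rpower t (x + 1 - 1) * exp (- t) - x * (Rpower t (x - 1) * exp (- t)).

Lemma g_derive (x t : R) : 0 < t -> is_derive (gfun x) t (dfun x t).
Proof.
  intro Ht. unfold gfun, dfun.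
  replace (x + 1 - 1) with x by ring.
  evar (l : R).
  assert (H : is_derive (fun u => Rpower u x * exp (- u)) t l).
  { apply (is_derive_mult (fun u => Rpower u x) (fun u => exp (-u))).
    now apply Rp_derive. apply expm_derive. intros; apply Rmult_comm. }
  subst l. apply is_derive_opp in H.
  match type of H with is_derive _ _ ?v => replace (Rpower t x * exp (- t) - x * (Rpower t (x - 1) * exp (- t))) with v end.
  exact H.
  unfold plus, mult, opp; simpl. ring.
Qed.

Lemma d_cont (x t : R) : 0 < t -> continuous (dfun x) t.
Proof.
  intro Ht. unfold dfun.
  apply (continuous_minus (fun u => Rpower u (x+1-1) * exp (- u)) (fun u => x * (Rpower u (x - 1) * exp (- u)))).
  now apply prod_cont.
  apply (continuous_scal_r x (fun u => (Rpower u (x - 1) * exp (- u)))).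
  now apply prod_cont.
Qed.

Lemma ball_R (c e y : R) : ball c e y <-> Rabs (y - c) < e.
Proof. unfold ball; simpl; unfold AbsRing_ball, abs, minus, plus, opp; simpl. tauto. Qed.

Lemma Rpower_pos (a y : R) : 0 < Rpower a y.
Proof. unfold Rpower. apply exp_pos. Qed.

Lemma g_lim0 (x : R) : 0 < x -> filterlim (gfun x) (at_right 0) (locally 0).
Proof.
  intro Hx. apply filterlim_locally. intro eps.
  exists (mkposreal _ (Rpower_pos eps (/ x))). intros t Ht Ht0.
  assert (Ht' : Rabs (t - 0) < Rpower eps (/ x)) by (apply ball_R; exact Ht).
  rewrite Rminus_0_r, Rabs_pos_eq in Ht' by lra.
  apply ball_R. unfold gfun. rewrite Rminus_0_r.
  rewrite Rabs_Ropp, Rabs_pos_eq.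
  2: { apply Rmult_le_pos; left; [apply Rpower_pos| apply exp_pos]. }
  apply Rle_lt_trans with (Rpower t x).
  { rewrite <- (Rmult_1_r (Rpower t x)) at 2. apply Rmult_le_compat_l. left; apply Rpower_pos.
    rewrite <- exp_0. left; apply exp_increasing; lra. }
  replace (pos eps) with (Rpower (Rpower eps (/ x)) x).
  apply Rlt_Rpower_l; auto.
  rewrite Rpower_mult. replace (/ x * x) with 1 by (field; lra). apply Rpower_1, cond_pos.
Qed.

Lemma g_liminf (x : R) : 0 < x -> filterlim (gfun x) (Rbar_locally p_infty) (locally 0).
Proof.
  intro Hx. apply filterlim_locally. intro eps.
  exists (Rmax 1 (2 * (x * ln (2 * x) - ln eps))). intros t Ht.
  assert (Ht1 : 1 < t) by (eapply Rle_lt_trans; [apply Rmax_l|exact Ht]).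
  assert (Ht2 : 2 * (x * ln (2 * x) - ln eps) < t) by (eapply Rle_lt_trans; [apply Rmax_r|exact Ht]).
  apply ball_R. unfold gfun. rewrite Rminus_0_r, Rabs_Ropp, Rabs_pos_eq.
  2: { apply Rmult_le_pos; left; [apply Rpower_pos| apply exp_pos]. }
  unfold Rpower. rewrite <- exp_plus.
  assert (Hl : ln (t / (2 * x)) <= t / (2 * x) - 1).
  { pose proof (exp_ineq1_le (ln (t / (2 * x)))). rewrite exp_ln in H.
    lra. apply Rdiv_lt_0_compat; lra. }
  rewrite ln_div in Hl by lra.
  assert (Hm : x * ln t <= x * ln (2 * x) + t / 2 - x).
  { assert (H1 : x * (ln t - ln (2 * x)) <= x * (t / (2 * x) - 1)) by (apply Rmult_le_compat_l; lra).
    assert (H2 : x * (t / (2 * x) - 1) = t / 2 - x) by (field; lra). lra. }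
  rewrite <- (exp_ln eps) by apply cond_pos.
  apply exp_increasing. lra.
Qed.

Definition FA := at_right 0.
Definition FB := Rbar_locally p_infty.

Lemma pos_prod (P : R * R -> Prop) :
  (forall a b, 0 < a -> 0 < b -> P (a, b)) -> filter_prod FA FB P.
Proof.
  intro H. apply (Filter_prod _ _ _ (fun a => 0 < a) (fun b => 0 < b)).
  - exists (mkposreal 1 Rlt_0_1). intros; auto.
  - exists 0. intros; auto.
  - intros; auto.
Qed.

Lemma FE (x : R) : 0 < x -> is_RInt_gen (dfun x) FA FB 0.
Proof.
  intro Hx.
  assert (HFA : ProperFilter FA) by exact (at_right_proper_filter 0).
  assert (HFB : ProperFilter FB) by exact (Rbar_locally_filter p_infty).
  assert (H : is_RInt_gen (Derive (gfun x)) FA FB (0 - 0)).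
  { apply is_RInt_gen_Derive.
    - apply pos_prod. intros a b Ha Hb t Ht. simpl in Ht. eexists. apply g_derive.
      eapply Rlt_le_trans. 2: apply Ht. apply Rmin_glb_lt; auto.
    - apply pos_prod. intros a b Ha Hb t Ht. simpl in Ht.
      assert (Ht0 : 0 < t) by (eapply Rlt_le_trans; [|apply Ht]; apply Rmin_glb_lt; auto).
      apply (continuous_ext_loc _ (dfun x)). 2: now apply d_cont.
      apply (filter_imp (fun u => 0 < u)). 
      intros u Hu. symmetry. apply is_derive_unique. now apply g_derive.
      apply (open_gt 0 t Ht0).
    - now apply g_lim0.
    - now apply g_liminf. }
  replace 0 with (0 - 0) by ring.
  apply (is_RInt_gen_ext (Derive (gfun x))); auto.
  - apply pos_prod. intros a b Ha Hb t Ht. simpl in Ht.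
    apply is_derive_unique. apply g_derive.
    eapply Rlt_le_trans. 2: apply Rlt_le, Ht. apply Rmin_glb_lt; auto.
Qed.

Definition PG (x L : R) := is_RInt_gen (fun t => Rpower t (x - 1) * exp (- t)) FA FB L.

Lemma FEf (x L : R) : 0 < x -> PG x L -> PG (x + 1) (x * L).
Proof.
  intros Hx HL.
  assert (HFA : ProperFilter FA) by exact (at_right_proper_filter 0).
  assert (HFB : ProperFilter FB) by exact (Rbar_locally_filter p_infty).
  assert (H := is_RInt_gen_plus _ _ _ _ (FE x Hx) (is_RInt_gen_scal _ x _ HL)).
  unfold PG. replace (x * L) with (plus 0 (scal x L)).
  2: { unfold plus, scal; simpl; unfold mult; simpl. ring. }
  eapply is_RInt_gen_ext. 2: exact H.
  apply pos_prod. intros a b _ _ t _. unfold dfun, plus, scal; simpl; unfold mult; simpl. ring.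
Qed.

Lemma FEb (x L : R) : 0 < x -> PG (x + 1) L -> PG x (L / x).
Proof.
  intros Hx HL.
  assert (HFA : ProperFilter FA) by exact (at_right_proper_filter 0).
  assert (HFB : ProperFilter FB) by exact (Rbar_locally_filter p_infty).
  assert (H := is_RInt_gen_scal _ (/ x) _ (is_RInt_gen_minus _ _ _ _ HL (FE x Hx))).
  unfold PG. replace (L / x) with (scal (/ x) (minus L 0)).
  2: { unfold minus, plus, opp, scal; simpl; unfold mult; simpl. field. lra. }
  eapply is_RInt_gen_ext. 2: exact H.
  apply pos_prod. intros a b _ _ t _. unfold dfun, minus, plus, opp, scal; simpl; unfold mult; simpl. field. lra.
Qed.

Lemma exR (f : R -> R) (Hc : forall t, 0 < t -> continuous f t) a b :
  0 < a -> 0 < b -> ex_RInt f a b.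
Proof.
  intros Ha Hb. apply (@ex_RInt_continuous R_CompleteNormedModule). intros z Hz. apply Hc.
  eapply Rlt_le_trans. 2: apply Hz. apply Rmin_glb_lt; auto.
Qed.

Lemma sup_exists (f : R -> R) (B : R) :
  (forall t, 0 < t -> continuous f t) -> (forall t, 0 < t -> 0 <= f t) ->
  (forall a b, 0 < a -> a <= b -> RInt f a b <= B) ->
  exists L, is_RInt_gen f FA FB L /\ (forall a b, 0 < a -> a <= b -> RInt f a b <= L).
Proof.
  intros Hc Hp HB.
  set (E := fun y => exists a b, 0 < a /\ a <= b /\ y = RInt f a b).
  assert (HE : bound E).
  { exists B. intros y (a & b & Ha & Hab & ->). auto. }
  assert (HE0 : exists y, E y).
  { exists (RInt f 1 1). exists 1, 1. repeat split; lra. }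
  destruct (completeness E HE HE0) as [L [HL1 HL2]].
  exists L. split.
  2: { intros a b Ha Hab. apply HL1. exists a, b. auto. }
  intros P [eps HP].
  assert (Hex : exists a0 b0, 0 < a0 /\ a0 <= b0 /\ L - eps < RInt f a0 b0).
  { apply NNPP. intro Hn.
    assert (L <= L - eps).
    { apply HL2. intros y (a & b & Ha & Hab & ->).
      apply Rnot_lt_le. intro Hlt. apply Hn. exists a, b. auto. }
    pose proof (cond_pos eps). lra. }
  destruct Hex as (a0 & b0 & Ha0 & Hab0 & Hlt).
  apply (Filter_prod _ _ _ (fun a => 0 < a < a0) (fun b => b0 < b)).
  - exists (mkposreal a0 Ha0). intros y Hy Hy0.
    assert (Hy' : Rabs (y - 0) < a0) by (apply ball_R; exact Hy).
    rewrite Rminus_0_r, Rabs_pos_eq in Hy' by lra. lra.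
  - exists b0. auto.
  - intros a b Ha Hb. simpl. exists (RInt f a b). split.
    + apply (@RInt_correct R_CompleteNormedModule). apply exR; auto; lra.
    + apply HP. apply ball_R.
      assert (Hup : RInt f a b <= L) by (apply HL1; exists a, b; repeat split; lra).
      assert (Hsplit : RInt f a b = RInt f a a0 + RInt f a0 b0 + RInt f b0 b).
      { rewrite <- (@RInt_Chasles R_CompleteNormedModule f a a0 b) by (apply exR; [exact Hc|lra|lra]).
        rewrite <- (@RInt_Chasles R_CompleteNormedModule f a0 b0 b) by (apply exR; [exact Hc|lra|lra]).
        unfold plus; simpl. ring. }
      assert (H1 : 0 <= RInt f a a0).
      { apply RInt_ge_0. lra. apply exR; [exact Hc|lra|lra]. intros; apply Hp; lra. }
      assert (H2 : 0 <= RInt f b0 b).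
      { apply RInt_ge_0. lra. apply exR; [exact Hc|lra|lra]. intros; apply Hp; lra. }
      apply Rabs_lt_between. lra.
Qed.

Lemma G32 : exists L, 0 < L /\ PG (/ 2 + 1) L.
Proof.
  set (f := fun t => Rpower t (/ 2 + 1 - 1) * exp (- t)).
  assert (Hc : forall t, 0 < t -> continuous f t) by (intros; now apply prod_cont).
  assert (Hp : forall t, 0 < t -> 0 <= f t).
  { intros t _. unfold f. apply Rmult_le_pos; left; [apply Rpower_pos|apply exp_pos]. }
  set (H := fun t => - ((2 + t) * exp (- t))).
  set (g := fun t => (1 + t) * exp (- t)).
  assert (Hd : forall t, is_derive H t (g t)).
  { intro t. unfold H, g. auto_derive; auto. ring. }
  assert (Hgc : forall t, continuous g t).
  { intro t. apply (@ex_derive_continuous R_AbsRing R_NormedModule). unfold g. auto_derive. auto. }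
  assert (HB : forall a b, 0 < a -> a <= b -> RInt f a b <= 2).
  { intros a b Ha Hab.
    apply Rle_trans with (RInt g a b).
    { apply RInt_le; auto.
      - apply exR; auto; lra.
      - apply (@ex_RInt_continuous R_CompleteNormedModule). auto.
      - intros t Ht. unfold f, g. apply Rmult_le_compat_r. left; apply exp_pos.
        replace (/ 2 + 1 - 1) with (/ 2) by ring. rewrite Rpower_sqrt by lra.
        pose proof (sqrt_sqrt t). pose proof (sqrt_pos t). nra. }
    rewrite (@is_RInt_unique R_CompleteNormedModule g a b (minus (H b) (H a))).
    2: { apply (@is_RInt_derive R_CompleteNormedModule); auto. }
    unfold minus, plus, opp; simpl. unfold H.
    pose proof (exp_pos (- b)). pose proof (exp_pos (- a)).
    pose proof (exp_ineq1_le a).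
    assert (exp a * exp (- a) = 1) by (rewrite <- exp_plus; replace (a + - a) with 0 by ring; apply exp_0).
    nra. }
  destruct (sup_exists f 2 Hc Hp HB) as [L [HL HLb]].
  exists L. split. 2: exact HL.
  apply Rlt_le_trans with (RInt f 1 2). 2: apply HLb; lra.
  apply RInt_gt_0. lra.
  intros t Ht. unfold f. apply Rmult_lt_0_compat; [apply Rpower_pos|apply exp_pos].
  intros t Ht. apply Hc. lra.
Qed.

Lemma G1 : PG 1 1.
Proof.
  assert (HFA : ProperFilter FA) by exact (at_right_proper_filter 0).
  assert (HFB : ProperFilter FB) by exact (Rbar_locally_filter p_infty).
  set (h := fun t => - exp (- t)).
  assert (Hd : forall t, is_derive h t (exp (- t))).
  { intro t. unfold h. auto_derive; auto. ring. }
  assert (H : is_RInt_gen (Derive h) FA FB (0 - (-1))).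
  { apply is_RInt_gen_Derive.
    - apply pos_prod. intros a b Ha Hb t Ht. eexists. apply Hd.
    - apply pos_prod. intros a b Ha Hb t Ht.
      apply (continuous_ext_loc _ (fun u => exp (- u))). 2: apply expm_cont.
      apply filter_forall. intro u. symmetry. apply is_derive_unique. apply Hd.
    - apply filterlim_locally. intro eps.
      exists eps. intros t Ht Ht0.
      assert (Ht' : Rabs (t - 0) < eps) by (apply ball_R; exact Ht).
      rewrite Rminus_0_r, Rabs_pos_eq in Ht' by lra.
      apply ball_R. unfold h.
      pose proof (exp_ineq1_le (- t)).
      assert (exp (- t) < 1) by (rewrite <- exp_0; apply exp_increasing; lra).
      rewrite Rabs_pos_eq; lra.
    - apply filterlim_locally. intro eps.
      exists (- ln eps). intros t Ht.
      apply ball_R. unfold h. rewrite Rminus_0_r, Rabs_Ropp, Rabs_pos_eq by (left; apply exp_pos).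
      rewrite <- (exp_ln eps) by apply cond_pos. apply exp_increasing. lra. }
  replace (0 - -1) with 1 in H by ring.
  unfold PG. revert H.
  apply (is_RInt_gen_ext (Derive h)); auto.
  apply pos_prod. intros a b _ _ t _. rewrite (is_derive_unique _ _ _ (Hd t)).
  replace (1 - 1) with 0 by ring. unfold Rpower. rewrite Rmult_0_l, exp_0. symmetry. apply Rmult_1_l.
Qed.

Lemma PG_Gamma (x L : R) : PG x L -> Gamma x = L.
Proof.
  intro H. unfold Gamma.
  apply (@is_RInt_gen_unique R_CompleteNormedModule (at_right 0) (Rbar_locally p_infty) _ _ (fun t => Rpower t (x - 1) * exp (- t))).
  exact H.
Qed.

Lemma PG_ext (x y L : R) : x = y -> PG x L -> PG y L.
Proof. intros ->; auto. Qed.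

Lemma Gall (m : nat) : exists L, 0 < L /\ PG (INR (S m) / 2) L.
Proof.
  assert (forall k, (exists L, 0 < L /\ PG (INR (S k) / 2) L) /\ (exists L, 0 < L /\ PG (INR (S (S k)) / 2) L)).
  { induction k as [|k [IH1 IH2]].
    - split.
      + destruct G32 as [L [HL HP]]. exists (L / / 2). split.
        apply Rdiv_lt_0_compat; lra.
        apply FEb in HP; [|lra]. eapply PG_ext; [|exact HP]. change (INR 1) with 1. field.
      + exists 1. split. lra. eapply PG_ext; [|exact G1]. change (INR 2) with (1+1). field.
    - split; auto.
      destruct IH1 as [L [HL HP]].
      assert (Hx : 0 < INR (S k) / 2) by (apply Rdiv_lt_0_compat; [apply lt_0_INR; lia|lra]).
      exists (INR (S k) / 2 * L). split. apply Rmult_lt_0_compat; auto.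
      apply FEf in HP; auto. eapply PG_ext; [|exact HP].
      rewrite !S_INR. field. }
  exact (proj1 (H m)).
Qed.

Lemma Gpos (m : nat) : 0 < Gamma (INR (S m) / 2).
Proof. destruct (Gall m) as [L [HL HP]]. now rewrite (PG_Gamma _ _ HP). Qed.

Lemma Grec (m : nat) : Gamma (INR (S (S (S m))) / 2) = INR (S m) / 2 * Gamma (INR (S m) / 2).
Proof.
  destruct (Gall m) as [L [HL HP]]. rewrite (PG_Gamma _ _ HP).
  apply PG_Gamma. apply FEf in HP.
  eapply PG_ext; [|exact HP]. rewrite !S_INR. field.
  apply Rdiv_lt_0_compat; [apply lt_0_INR; lia|lra].
Qed.

Definition GG (m : nat) := Gamma (INR (S m) / 2).

Lemma omega_eq (n : nat) : omega n =
  if Nat.odd n then (2 * INR n + 3) / (INR n + 1) * (GG (S n) / GG n)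
  else (INR n + 1) * (GG n / GG (S n)).
Proof.
  unfold omega, GG.
  replace (INR n / 2 + 1) with (INR (S (S n)) / 2) by (rewrite !S_INR; field).
  replace ((INR n + 1) / 2) with (INR (S n) / 2) by (rewrite !S_INR; field).
  reflexivity.
Qed.

Lemma odd_SS n : Nat.odd (S (S n)) = Nat.odd n.
Proof. rewrite Nat.odd_succ, Nat.even_succ. reflexivity. Qed.
Lemma odd_S n : Nat.odd (S n) = negb (Nat.odd n).
Proof. rewrite Nat.odd_succ, <- Nat.negb_odd. reflexivity. Qed.

Lemma main_n (n : nat) : 0 < omega n /\ omega n < omega (S n) /\ tau (S n) <= tau n.
Proof.
  unfold tau. rewrite !omega_eq, odd_SS, odd_S.
  assert (Ha : 0 < GG n) by apply Gpos.
  assert (Hb : 0 < GG (S n)) by apply Gpos.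
  assert (Hc : GG (S (S n)) = (INR n + 1) / 2 * GG n) by (unfold GG; rewrite Grec, S_INR; reflexivity).
  assert (Hd : GG (S (S (S n))) = (INR n + 2) / 2 * GG (S n)) by (unfold GG; rewrite Grec, !S_INR; f_equal; field).
  rewrite Hd, Hc. rewrite !S_INR.
  pose proof (pos_INR n) as HN.
  set (N := INR n) in *. set (a := GG n) in *. set (b := GG (S n)) in *.
  destruct (Nat.odd n); simpl.
  - set (s := b / a).
    assert (Hs : 0 < s) by (apply Rdiv_lt_0_compat; auto).
    assert (E0 : (2 * N + 3) / (N + 1) * (b / a) = (2 * N + 3) / (N + 1) * s) by reflexivity.
    assert (E1 : (N + 1 + 1) * (b / ((N + 1) / 2 * a)) = 2 * (N + 2) / (N + 1) * s) by (unfold s; field; lra).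
    assert (E2 : (2 * (N + 1 + 1) + 3) / (N + 1 + 1 + 1) * ((N + 2) / 2 * b / ((N + 1) / 2 * a))
                 = (2 * N + 7) / (N + 3) * ((N + 2) / (N + 1)) * s) by (unfold s; field; lra).
    rewrite E1, E2.
    assert (P0 : 0 < (2 * N + 3) / (N + 1)) by (apply Rdiv_lt_0_compat; lra).
    assert (D1 : 2 * (N + 2) / (N + 1) * s - (2 * N + 3) / (N + 1) * s = s / (N + 1)) by (field; lra).
    assert (D2 : (2 * N + 7) / (N + 3) * ((N + 2) / (N + 1)) * s - 2 * (N + 2) / (N + 1) * s
                 = s / (N + 1) - s / ((N + 1) * (N + 3))) by (field; lra).
    assert (P1 : 0 < s / (N + 1)) by (apply Rdiv_lt_0_compat; lra).
    assert (P2 : 0 < s / ((N + 1) * (N + 3))) by (apply Rdiv_lt_0_compat; nra).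
    repeat split; [apply Rmult_lt_0_compat; auto| lra | lra].
  - set (r := a / b).
    assert (Hr : 0 < r) by (apply Rdiv_lt_0_compat; auto).
    assert (E1 : (2 * (N + 1) + 3) / (N + 1 + 1) * ((N + 1) / 2 * a / b) = (2 * N + 5) * (N + 1) / (2 * (N + 2)) * r) by (unfold r; field; lra).
    assert (E2 : (N + 1 + 1 + 1) * ((N + 1) / 2 * a / ((N + 2) / 2 * b)) = (N + 3) * (N + 1) / (N + 2) * r) by (unfold r; field; lra).
    rewrite E1, E2. fold r.
    assert (D1 : (2 * N + 5) * (N + 1) / (2 * (N + 2)) * r - (N + 1) * r = (N + 1) * r / (2 * (N + 2))) by (field; lra).
    assert (D2 : (N + 3) * (N + 1) / (N + 2) * r - (2 * N + 5) * (N + 1) / (2 * (N + 2)) * r = (N + 1) * r / (2 * (N + 2))) by (field; lra).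
    assert (P1 : 0 < (N + 1) * r / (2 * (N + 2))) by (apply Rdiv_lt_0_compat; nra).
    repeat split; [apply Rmult_lt_0_compat; lra| lra | lra].
Qed.

Theorem lemma6p4 :
  (forall n : nat, 0 < omega n) /\
  (forall n : nat, omega n < omega (S n)) /\
  (forall n : nat, 0 < tau n) /\
  (forall n : nat, tau (S n) <= tau n).
Proof.
  repeat split; intro n; destruct (main_n n) as (H1 & H2 & H3); auto.
  unfold tau. lra.
Qed.
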